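(* Define the sequence $(y_k)_{k\ge1}$ by $y_1=1$ and $y_{k+1}=y_k+y_k^{1/3}$ for $k\ge1$. For any fixed real number $\alpha>\frac23$, we have $\sum_{k=1}^\infty y_k^{-\alpha}\ll 1$, i.e. the series converges and is bounded by a constant depending only on $\alpha$. *)

(* Defs.v *)
From Stdlib Require Import Reals.
From Coquelicot Require Import Coquelicot.
Open Scope R_scope.

(* yseq n is y_{n+1} of the paper: y_1 = 1, y_{k+1} = y_k + y_k^{1/3}.
   All terms are >= 1 > 0, so Rpower is the genuine real power. *)
Fixpoint yseq (n : nat) : R :=
  match n with
  | O => 1
  | S m => yseq m + Rpower (yseq m) (1/3)
  end.

(* Main.v *)
Require Import Defs.
From Stdlib Require Import Reals.
From Coquelicot Require Import Coquelicot.
From Stdlib Require Import Lra.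
Open Scope R_scope.

Lemma yseq_ge1 n : 1 <= yseq n.
Proof.
  induction n as [|n IH]; simpl; [lra|].
  assert (0 < Rpower (yseq n) (1/3)) by (unfold Rpower; apply exp_pos). lra.
Qed.

Lemma step (alpha y : R) : 2/3 < alpha -> 1 <= y ->
  Rpower (y + Rpower y (1/3)) (- alpha) <=
  (2 / (alpha - 2/3)) * (Rpower y (- (alpha - 2/3)) - Rpower (y + Rpower y (1/3)) (- (alpha - 2/3))).
Proof.
  intros Ha Hy.
  set (g := alpha - 2/3).
  assert (Hg : 0 < g) by (unfold g; lra).
  set (a := ln y).
  assert (Ha0 : 0 <= a).
  { unfold a. rewrite <- ln_1. destruct (Req_dec y 1) as [->|Hne]; [lra|].
    left; apply ln_increasing; lra. }
  set (t := exp (-(2/3) * a)).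
  assert (Ht0 : 0 < t) by apply exp_pos.
  assert (Ht1 : t <= 1).
  { unfold t. rewrite <- exp_0. destruct (Req_dec a 0) as [->|Hne].
    - replace (-(2/3)*0) with 0 by ring. lra.
    - left; apply exp_increasing; nra. }
  assert (Hy' : y + Rpower y (1/3) = y * (1 + t)).
  { unfold Rpower, t. fold a.
    assert (E: exp (1/3 * a) = exp a * exp (-(2/3)*a)).
    { rewrite <- exp_plus. f_equal. lra. }
    rewrite E. unfold a. rewrite exp_ln by lra. ring. }
  rewrite Hy'.
  set (d := ln (1 + t)).
  assert (Hb : ln (y * (1 + t)) = a + d) by (unfold a, d; apply ln_mult; lra).
  assert (Hd : t / (1 + t) <= d).
  { unfold d. assert (H1 := exp_ineq1_le (ln (/ (1 + t)))).
    rewrite exp_ln in H1 by (apply Rinv_0_lt_compat; lra).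
    rewrite ln_Rinv in H1 by lra.
    assert (/ (1 + t) = 1 - t / (1 + t)) by (field; lra). lra. }
  assert (Htd : t <= 2 * d).
  { assert (t / 2 <= t / (1 + t)).
    { unfold Rdiv. apply Rmult_le_compat_l; [lra|]. apply Rinv_le_contravar; lra. }
    lra. }
  unfold Rpower. rewrite Hb. fold a.
  set (E := exp (- g * (a + d))).
  assert (HE : 0 < E) by apply exp_pos.
  assert (H1 : exp (- alpha * (a + d)) <= E * t).
  { unfold E, t. rewrite <- exp_plus.
    assert (- alpha * (a + d) <= - g * (a + d) + - (2 / 3) * a).
    { unfold g. assert (0 <= d) by (apply Rle_trans with (t/(1+t)); [apply Rlt_le, Rdiv_lt_0_compat|]; lra). nra. }
    destruct H; [left; apply exp_increasing; auto| right; f_equal; auto]. }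
  assert (H2 : exp (- g * a) = E * exp (g * d)).
  { unfold E. rewrite <- exp_plus. f_equal. lra. }
  assert (H3 := exp_ineq1_le (g * d)).
  rewrite H2.
  apply Rle_trans with (E * t); [exact H1|].
  apply Rle_trans with (E * (2 * d)); [apply Rmult_le_compat_l; lra|].
  assert (E * (exp (g*d)) - E >= E * (g * d)) by nra.
  apply Rle_trans with (2 / g * (E * (g * d))).
  - right. field. lra.
  - apply Rmult_le_compat_l. apply Rlt_le, Rdiv_lt_0_compat; lra. lra.
Qed.

Lemma R1p x : Rpower 1 x = 1.
Proof. unfold Rpower. rewrite ln_1. replace (x * 0) with 0 by ring. apply exp_0. Qed.

Theorem lemma3p1 (alpha : R) (Halpha : 2/3 < alpha) :
  ex_series (fun n : nat => Rpower (yseq n) (- alpha)).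
Proof.
  set (g := alpha - 2/3).
  set (u := fun n : nat => Rpower (yseq n) (- alpha)).
  assert (Hpos : forall n, 0 <= u n) by (intros; unfold u, Rpower; left; apply exp_pos).
  assert (Hb : forall n, sum_f_R0 u (S n) <= 1 + 2 / g * (1 - Rpower (yseq (S n)) (- g))).
  { induction n as [|n IH].
    - simpl. unfold u. simpl. rewrite !R1p.
      assert (H := step alpha 1 Halpha (Rle_refl 1)).
      fold g in H. rewrite !R1p in H. lra.
    - simpl sum_f_R0. simpl sum_f_R0 in IH.
      assert (H := step alpha (yseq (S n)) Halpha (yseq_ge1 _)).
      fold g in H. change (yseq (S (S n))) with (yseq (S n) + Rpower (yseq (S n)) (1/3)).
      change (u (S (S n))) with (Rpower (yseq (S n) + Rpower (yseq (S n)) (1/3)) (-alpha)).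
      set (K := 2 / g) in *. set (P2 := Rpower (yseq (S n) + Rpower (yseq (S n)) (1 / 3)) (- g)) in *.
      set (P1 := Rpower (yseq (S n)) (- g)) in *. nra. }
  assert (Hb' : forall n, sum_f_R0 u n <= 1 + 2 / g).
  { intros [|n].
    - simpl. unfold u. simpl. rewrite R1p.
      assert (0 < 2 / g) by (apply Rdiv_lt_0_compat; unfold g; lra). lra.
    - apply Rle_trans with (1 + 2 / g * (1 - Rpower (yseq (S n)) (- g))); [apply Hb|].
      assert (0 < Rpower (yseq (S n)) (- g)) by (unfold Rpower; apply exp_pos).
      assert (0 < 2 / g) by (apply Rdiv_lt_0_compat; unfold g; lra). nra. }
  destruct (growing_cv (sum_f_R0 u)) as [l Hl].
  - intro n. simpl. specialize (Hpos (S n)). lra.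
  - exists (1 + 2 / g). intros x [i ->]. apply Hb'.
  - exists l. apply is_series_Reals. exact Hl.
Qed.
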